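(* Let $S$ be any set, $m\ge 1$, and $s,s'\in S^m$. Then $s$ and $s'$ are mirrored if and only if $s=s'$ or $s=\mathrm{rev}\,s'$.
   Context: $\mathcal{S}_m$ is the group of bijections of $I_m=\{1,\ldots,m\}$, with $\sigma\circ\tau$ meaning apply $\tau$ first. $\mathscr{T}_m=\{\sigma\in\mathcal{S}_m \mid \exists t\in I_m:\ \sigma(1)>\sigma(2)>\cdots>\sigma(t)=1,\ \sigma(t)<\sigma(t+1)<\cdots<\sigma(m)\}$. A sequence $s\in S^m$ is viewed as a function $s:I_m\to S$, and $\mathcal{S}_m$ acts on $S^m$ on the left by $\sigma s=s\circ\sigma^{-1}$, i.e. $\sigma(s_1,\ldots,s_m)=(s_{\sigma^{-1}(1)},\ldots,s_{\sigma^{-1}(m)})$. For $i\in I_m$, $\tau_i(j)=i+1-j$ for $j\le i$ and $\tau_i(j)=j$ for $j>i$; $\mathrm{rev}\,s:=\tau_m s$ is the reversed sequence. Two sequences $s,s'\in S^m$ are called mirrored if for every $\sigma\in\mathscr{T}_m$ there exists $\sigma'\in\mathscr{T}_m$ with $\sigma s=\sigma' s'$, and for every $\tau'\in\mathscr{T}_m$ there exists $\tau\in\mathscr{T}_m$ with $\tau' s'=\tau s$. *)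

(* Defs.v *)
(* Indices are 0-based: I_m = {1..m} is rendered as 'I_m = {0..m-1}. *)
From mathcomp Require Import all_boot all_fingroup.
Set Implicit Arguments. Unset Strict Implicit. Unset Printing Implicit Defensive.

Local Open Scope group_scope.

Definition in_Tm (m : nat) (sigma : 'S_m) : Prop :=
  exists t : 'I_m,
    nat_of_ord (sigma t) = 0%N /\
    (forall i j : 'I_m, (i < j)%N -> (j <= t)%N -> (sigma j < sigma i)%N) /\
    (forall i j : 'I_m, (t <= i)%N -> (i < j)%N -> (sigma i < sigma j)%N).

(* A sequence s in S^m is a function 'I_m -> S; left action sigma s = s o sigma^-1. *)
Definition perm_act (S : Type) (m : nat) (sigma : 'S_m) (s : 'I_m -> S) : 'I_m -> S :=
  fun i => s (sigma^-1 i).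

(* rev s = tau_m s, where tau_m (j) = m+1-j (1-based) i.e. rev_ord (0-based). *)
Definition tau_m (m : nat) : 'S_m := perm (@rev_ord_inj m).

Definition rev_seq (S : Type) (m : nat) (s : 'I_m -> S) : 'I_m -> S :=
  perm_act (tau_m m) s.

Definition mirrored (S : Type) (m : nat) (s s' : 'I_m -> S) : Prop :=
  (forall sigma : 'S_m, in_Tm sigma ->
     exists2 sigma' : 'S_m, in_Tm sigma' & perm_act sigma s = perm_act sigma' s') /\
  (forall tau' : 'S_m, in_Tm tau' ->
     exists2 tau : 'S_m, in_Tm tau & perm_act tau' s' = perm_act tau s).

(* Main.v *)
Require Import Defs.
From mathcomp Require Import all_boot all_fingroup.
From mathcomp Require Import zify.
From Stdlib Require Import Classical FunctionalExtensionality.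
Set Implicit Arguments. Unset Strict Implicit. Unset Printing Implicit Defensive.


Inductive peel {S : Type} : seq S -> seq S -> Prop :=
| peel_nil : peel [::] [::]
| peel_L x l w : peel l w -> peel (x :: l) (x :: w)
| peel_R x l w : peel l w -> peel (rcons l x) (x :: w).

Lemma peel_size {S : Type} (l w : seq S) : peel l w -> size w = size l.
Proof. elim=> //= [x l0 w0 _ ->|x l0 w0 _ ->]; by rewrite ?size_rcons. Qed.

Lemma peel_refl {S : Type} (l : seq S) : peel l l.
Proof. elim: l => [|x l IH]; [exact: peel_nil | exact: peel_L]. Qed.

Lemma peel_rev {S : Type} (l : seq S) : peel l (rev l).
Proof.
elim/last_ind: l => [|l x IH]; first exact: peel_nil.
by rewrite rev_rcons; apply: peel_R.
Qed.

Lemma peel_revl {S : Type} (l w : seq S) : peel l w -> peel (rev l) w.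
Proof.
elim=> [|x l0 w0 _ IH|x l0 w0 _ IH]; first exact: peel_nil.
- by rewrite rev_cons; apply: peel_R.
- by rewrite rev_rcons; apply: peel_L.
Qed.

Lemma peel_revE {S : Type} (l w : seq S) : peel (rev l) w <-> peel l w.
Proof. by split=> [/peel_revl|/peel_revl //]; rewrite revK. Qed.

Lemma peel_inv {S : Type} (l w : seq S) y : peel l (y :: w) ->
  (exists l1, l = y :: l1 /\ peel l1 w) \/ (exists l1, l = rcons l1 y /\ peel l1 w).
Proof.
move=> H; inversion H; subst; [left|right]; by exists l0.
Qed.

Lemma peel_nilw {S : Type} (l : seq S) : peel l [::] -> l = [::].
Proof. by move/peel_size => /= /esym /size0nil. Qed.

Lemma nseqSr {S : Type} n (a : S) : nseq n.+1 a = rcons (nseq n a) a.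
Proof. by elim: n => //= n ->. Qed.

Lemma peel_nseq {S : Type} n (a : S) w : peel (nseq n a) w -> w = nseq n a.
Proof.
elim: n w => [|n IH] w; first by move/peel_size => /size0nil.
case: w => [/peel_nilw //|y w].
move=> H; case: (peel_inv H) => [[l1 [E P]]|[l1 [E P]]].
  by case: E => <- E; rewrite -E in P; rewrite (IH _ P).
rewrite nseqSr in E; case: (rcons_inj E) => E1 E2.
by rewrite -E1 in P; rewrite (IH _ P) -E2.
Qed.


Definition NH {S : Type} (a : S) (v : seq S) := forall w, v <> a :: w.
Definition NL {S : Type} (a : S) (v : seq S) := forall w, v <> rcons w a.

Lemma NH_cat {S : Type} (a : S) v X : v <> [::] -> NH a v -> v ++ X <> a :: X -> True.
Proof. by []. Qed.

Lemma head_contra {S : Type} (a : S) v X l1 : v <> [::] -> NH a v -> v ++ X <> a :: l1.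
Proof. by case: v => [//|c v1] _ H /= [E _]; apply: (H v1); rewrite E. Qed.

Lemma last_contra {S : Type} (a : S) v X l1 : v <> [::] -> NL a v -> X ++ v <> rcons l1 a.
Proof.
case/lastP: v => [//|v1 z] _ H; rewrite -rcons_cat => /rcons_inj [_ E].
by apply: (H v1); rewrite E.
Qed.

Lemma PL {S : Type} (a : S) v k : v <> [::] -> NH a v -> NL a v ->
  forall i j w, peel (nseq i a ++ v ++ nseq j a) (nseq k a ++ w) ->
  exists p q, [/\ p <= i, q <= j, p + q = k &
                 peel (nseq (i - p) a ++ v ++ nseq (j - q) a) w].
Proof.
move=> vn Hh Hl; elim: k => [|k IH] i j w.
  by move=> P; exists 0, 0; rewrite !subn0.
move=> /= P; case: (peel_inv P) => [[l1 [E P1]]|[l1 [E P1]]]; clear P.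
- case: i E => [|i] /= E; first by case: (head_contra vn Hh E).
  case: E => E; rewrite -E in P1.
  case: (IH _ _ _ P1) => p [q [Hp Hq Hpq P2]].
  by exists p.+1, q; split => //; rewrite ?subSS /= ?addSn ?Hpq.
- case: j E => [|j] E.
    by move: E; rewrite /= cats0 => E; case: (last_contra vn Hl E).
  rewrite nseqSr catA -rcons_cat in E.
  have E1 := rcons_injl _ E.
  rewrite -E1 -catA in P1.
  case: (IH _ _ _ P1) => p [q [Hp Hq Hpq P2]].
  by exists p, q.+1; split => //; rewrite ?addnS ?Hpq ?subSS.
Qed.

Lemma addL {S : Type} (a : S) p i M w : peel (nseq i a ++ M) w ->
  peel (nseq (p + i) a ++ M) (nseq p a ++ w).
Proof. by elim: p => //= p IH P; apply: peel_L; apply: IH. Qed.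

Lemma addR {S : Type} (a : S) q j M w : peel (M ++ nseq j a) w ->
  peel (M ++ nseq (q + j) a) (nseq q a ++ w).
Proof.
elim: q => // q IH P; rewrite addSn nseqSr -rcons_cat; apply: peel_R; exact: IH.
Qed.

Lemma PLc {S : Type} (a : S) v p q i j w : p <= i -> q <= j ->
  peel (nseq (i - p) a ++ v ++ nseq (j - q) a) w ->
  peel (nseq i a ++ v ++ nseq j a) (nseq (p + q) a ++ w).
Proof.
move=> Hp Hq P.
have := addL p P; rewrite subnKC // => P2.
have P3 := @addR _ a q (j - q) (nseq i a ++ v) (nseq p a ++ w).
rewrite subnKC // -!catA in P3.
by rewrite addnC nseqD -catA; apply: P3.
Qed.


Lemma Wlem {S : Type} (a c : S) j : c <> a -> forall n x y, size x < n ->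
  x ++ nseq j a = nseq j a ++ y -> c :: x = rcons y c -> rev (c :: x) = c :: x.
Proof.
move=> ca; elim=> [//|n IH] x y Hs E1 E2.
case: (ltnP (size x) j) => Hj.
  case/lastP: x Hs E1 E2 Hj => [//|x0 z] Hs E1 E2 Hj.
  exfalso; apply: ca.
  have : rcons (c :: x0) z = rcons y c by rewrite -E2.
  move/rcons_inj => [_ <-].
  have := congr1 (fun s => nth z s (size x0)) E1 => /=.
  rewrite nth_cat size_rcons ltnSn nth_rcons ltnn eqxx.
  rewrite nth_cat size_nseq nth_nseq; rewrite size_rcons in Hj.
  have h : size x0 < j by apply: ltnW.
  by rewrite h => ->.
have Ex : x = take j x ++ drop j x by rewrite cat_take_drop.
have St : size (take j x) = j by rewrite size_take; case: ltngtP Hj => // ->.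
have := congr1 (take j) E1; rewrite {1}Ex -catA take_size_cat //.
rewrite take_size_cat ?size_nseq // => Et.
have := congr1 (drop j) E1; rewrite {1}Ex -catA drop_size_cat //.
rewrite drop_size_cat ?size_nseq // => Ed.
set z := drop j x in Ex Ed.
rewrite Ex Et in E2 *; rewrite -Ed in E2.
suff Rz : rev z = z.
  by rewrite rev_cons rev_cat Rz rev_nseq -E2.
case: z Ex Ed E2 => [//|d z1] Ex Ed E2.
have dc : d = c by case: E2.
have Ez := lastI d z1; set z2 := belast d z1 in Ez; set e := last d z1 in Ez.
have ec : e = c.
  move: E2; rewrite Ez.
  by move/(congr1 (@rev S)); rewrite rev_cons rev_rcons rev_cat rev_rcons /= => -[].
rewrite ec in Ez; rewrite dc in Ez E2 *.
have E1' : z1 ++ nseq j a = nseq j a ++ z2.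
  have : rcons (c :: nseq j a ++ z2) c = rcons (c :: z1 ++ nseq j a) c.
    by rewrite -E2 /= rcons_cat -Ez.
  by move/(rcons_injl c) => -[].
apply: (IH z1 z2) => //.
by move: Hs; rewrite Ex size_cat St /=; lia.
Qed.


Definition Peq {S : Type} (l l' : seq S) := forall w, peel l w <-> peel l' w.

Lemma NH_rev {S : Type} (a : S) u : NL a u -> NH a (rev u).
Proof. by move=> H w E; apply: (H (rev w)); rewrite -rev_cons -E revK. Qed.

Lemma NL_rev {S : Type} (a : S) u : NH a u -> NL a (rev u).
Proof. by move=> H w E; apply: (H (rev w)); rewrite -rev_rcons -E revK. Qed.

Lemma rev_nz {S : Type} (u : seq S) : u <> [::] -> rev u <> [::].
Proof. by move=> H E; apply: H; rewrite -(revK u) E. Qed.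

Lemma revL {S : Type} (a : S) i u j :
  rev (nseq i a ++ u ++ nseq j a) = nseq j a ++ rev u ++ nseq i a.
Proof. by rewrite !rev_cat !rev_nseq catA. Qed.

Lemma SL {S : Type} (a c : S) u i j w : u <> [::] -> NH a u -> NL a u -> i < j -> c <> a ->
  peel (nseq i a ++ u ++ nseq j a) (nseq i a ++ c :: w) ->
  exists u1, u = c :: u1 /\ peel (u1 ++ nseq j a) w.
Proof.
move=> un Hh Hl ij ca P.
case: (PL un Hh Hl P) => p [q [Hp Hq Hpq P1]].
case: (peel_inv P1) => [[l1 [E P2]]|[l1 [E P2]]].
- case Eip: (i - p) E => [|k] E; last by case: E => /esym.
  have jq : q = 0 by lia.
  rewrite jq subn0 in E.
  case: u un Hh Hl E {P P1} => [//|d u1] _ _ _ /= [-> E].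
  by exists u1; split => //; rewrite E.
- case Ejq: (j - q) E => [|k] E; first by lia.
  move: E; rewrite nseqSr catA -rcons_cat => /rcons_inj [_ E].
  by case: ca.
Qed.

Lemma SLc {S : Type} (a c : S) u1 i j w : peel (u1 ++ nseq j a) w ->
  peel (nseq i a ++ (c :: u1) ++ nseq j a) (nseq i a ++ c :: w).
Proof.
move=> P.
have := @PLc _ a (c :: u1) i 0 i j (c :: w) (leqnn i) (leq0n j).
by rewrite addn0 subnn subn0; apply; apply: peel_L.
Qed.

Lemma Glt {S : Type} (a : S) i j u :
  (forall l1 l2 : seq S, size l1 < size (nseq i a ++ u ++ nseq j a) -> Peq l1 l2 ->
     l2 = l1 \/ l2 = rev l1) ->
  u <> [::] -> NH a u -> NL a u -> i < j ->
  Peq (nseq i a ++ u ++ nseq j a) (nseq i a ++ rev u ++ nseq j a) -> rev u = u.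
Proof.
move=> IH un Hh Hl ij E.
case: u un Hh Hl IH E => [//|c x] _ Hh Hl IH E.
have ca : c <> a by move=> ca; apply: (Hh x); rewrite ca.
have rn : rev (c :: x) <> [::] by apply: rev_nz.
have rh := NH_rev Hl; have rl := NL_rev Hh.
have P0 : peel (nseq i a ++ rev (c :: x) ++ nseq j a) (nseq i a ++ c :: (x ++ nseq j a)).
  by apply/E; apply: SLc; apply: peel_refl.
case: (SL rn rh rl ij ca P0) => x2 [Ex2 _].
have E' : Peq (x ++ nseq j a) (x2 ++ nseq j a).
  move=> w; split => P.
  - have /E P2 := @SLc _ a c x i j w P.
    by case: (SL rn rh rl ij ca P2) => u1 [Eu P3]; rewrite Ex2 in Eu; case: Eu => ->.
  - have P2 := @SLc _ a c x2 i j w P; rewrite -Ex2 in P2; move/E: P2 => P2.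
    have cn : c :: x <> [::] by [].
    by case: (SL cn Hh Hl ij ca P2) => u1 [[<-] P3].
have Hs : size (x ++ nseq j a) < size (nseq i a ++ (c :: x) ++ nseq j a).
  by rewrite !size_cat /= !size_nseq; lia.
case: (IH _ _ Hs E') => Ex.
- have Sz : size x2 = size x by move/(congr1 size): Ex; rewrite !size_cat; lia.
  have := congr1 (take (size x)) Ex; rewrite -{1}Sz !take_size_cat // => Ex'.
  by rewrite Ex2 Ex'.
- move/(congr1 (@rev S)): Ex; rewrite revK rev_cat rev_nseq => Ex.
  apply: (Wlem ca (j := j) (n := (size x).+1) (y := rev x2)) => //.
  by rewrite -rev_cons -Ex2 revK.
Qed.

Lemma G2 {S : Type} (a : S) i j u :
  (forall l1 l2 : seq S, size l1 < size (nseq i a ++ u ++ nseq j a) -> Peq l1 l2 ->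
     l2 = l1 \/ l2 = rev l1) ->
  u <> [::] -> NH a u -> NL a u -> i != j ->
  Peq (nseq i a ++ u ++ nseq j a) (nseq i a ++ rev u ++ nseq j a) -> rev u = u.
Proof.
move=> IH un Hh Hl nij E.
case: (ltngtP i j) => [ij|ij|eij]; [exact: Glt IH un Hh Hl ij E| |by rewrite eij eqxx in nij].
have Hs : size (nseq j a ++ rev u ++ nseq i a) = size (nseq i a ++ u ++ nseq j a).
  by rewrite !size_cat size_rev !size_nseq; lia.
suff H : rev (rev u) = rev u by rewrite revK in H; rewrite -H.
apply: (Glt (a := a) (i := j) (j := i)) => //.
- by rewrite Hs.
- exact: rev_nz.
- exact: NH_rev.
- exact: NL_rev.
move=> w; rewrite -revL peel_revE revK E -peel_revE revL revK.
by [].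
Qed.


Lemma Dec {S : Type} (a : S) l : l = nseq (size l) a \/
  exists i u j, [/\ l = nseq i a ++ u ++ nseq j a, u <> [::], NH a u & NL a u].
Proof.
elim: l => [|x l [E|[i [u [j [E un Hh Hl]]]]]]; first by left.
- case: (classic (x = a)) => [->|xa]; first by left; rewrite /= -E.
  right; exists 0, [:: x], (size l); split => //.
  + by rewrite /= -E.
  + by move=> w [].
  + case=> [|y w] /=; first by case.
    by case=> _ /(congr1 size); rewrite size_rcons.
- case: (classic (x = a)) => [xa|xa].
    by right; exists i.+1, u, j; split => //; rewrite E xa.
  right; exists 0, (x :: nseq i a ++ u), j; split => //.
  + by rewrite E /= catA.
  + by move=> w [].
  + by move=> w E'; apply: (last_contra (X := x :: nseq i a) un Hl E').
Qed.

Lemma UB {S : Type} (a : S) u i j k w : u <> [::] -> NH a u -> NL a u ->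
  peel (nseq i a ++ u ++ nseq j a) (nseq k a ++ w) -> k <= i + j.
Proof. by move=> un Hh Hl P; case: (PL un Hh Hl P) => p [q [Hp Hq <- _]]; lia. Qed.

Lemma VE {S : Type} (a : S) u i j w : u <> [::] -> NH a u -> NL a u ->
  peel (nseq i a ++ u ++ nseq j a) (nseq (i + j) a ++ w) <-> peel u w.
Proof.
move=> un Hh Hl; split => P.
  case: (PL un Hh Hl P) => p [q [Hp Hq Hpq P1]].
  have E1 : i - p = 0 by lia.
  have E : j - q = 0 by lia.
  by rewrite E1 E /= cats0 in P1.
by apply: PLc => //; rewrite !subnn /= cats0.
Qed.

Lemma LB {S : Type} (a c : S) u i j k w : u <> [::] -> NH a u -> NL a u -> c <> a ->
  peel (nseq i a ++ u ++ nseq j a) (nseq k a ++ c :: w) -> minn i j <= k.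
Proof.
move=> un Hh Hl ca P.
case: (PL un Hh Hl P) => p [q [Hp Hq Hpq P1]].
case: (peel_inv P1) => [[l1 [E _]]|[l1 [E _]]].
- case Eip: (i - p) E => [|k'] E; last by case: E => /esym.
  lia.
- case Ejq: (j - q) E => [|k'] E; first by lia.
  move: E; rewrite nseqSr catA -rcons_cat => /rcons_inj [_ E].
  by case: ca.
Qed.

Lemma MW {S : Type} (a : S) u i j : u <> [::] -> NH a u -> NL a u ->
  exists c w, c <> a /\ peel (nseq i a ++ u ++ nseq j a) (nseq (minn i j) a ++ c :: w).
Proof.
move=> un Hh Hl.
case: (leqP i j) => ij.
  case: u un Hh Hl => [//|c x] _ Hh _.
  exists c, (x ++ nseq j a); split; first by move=> ca; apply: (Hh x); rewrite ca.
  by apply: peel_refl.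
have rn : rev u <> [::] by apply: rev_nz.
have Hh' := NH_rev Hl.
case Er: (rev u) rn Hh' => [//|c x] _ Hh'.
exists c, (x ++ nseq i a); split; first by move=> ca; apply: (Hh' x); rewrite ca.
have := peel_rev (nseq i a ++ u ++ nseq j a).
by rewrite revL Er.
Qed.

Lemma nseq_contra {S : Type} (a : S) u X i n : u <> [::] -> NH a u ->
  nseq i a ++ u ++ X = nseq n a -> False.
Proof.
move=> un Hh; elim: i n => [|i IH] [|n] /=.
- by case: u un Hh.
- by move=> E; apply: (head_contra un Hh E).
- by [].
- by case=> /IH.
Qed.


Lemma comb {S : Type} N : forall l l' : seq S, size l < N -> Peq l l' -> l' = l \/ l' = rev l.
Proof.
elim: N => [//|N IH] l l' Hs E.
case: l Hs E => [|a l0] Hs E.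
  have := proj2 (E l') (peel_refl l'); move=> /peel_size /= /size0nil ->; by left.
case: (Dec a (a :: l0)) => [Ea|[i [u [j [Ea un Hh Hl]]]]].
  have P : peel (nseq (size (a :: l0)) a) l' by rewrite -Ea; exact: (proj2 (E l') (peel_refl l')).
  by left; rewrite (peel_nseq P) -Ea.
have i1 : 0 < i.
  case: i Ea => [|i] // Ea; exfalso.
  by apply: (head_contra un Hh (X := nseq j a) (l1 := l0)); rewrite Ea.
rewrite Ea in Hs E *; clear Ea l0.
have IH' : forall l1 l2 : seq S, size l1 < size (nseq i a ++ u ++ nseq j a) ->
    Peq l1 l2 -> l2 = l1 \/ l2 = rev l1.
  by move=> l1 l2 H; apply: IH; apply: leq_trans H _.
case: (Dec a l') => [Ea'|[i' [u' [j' [Ea' un' Hh' Hl']]]]].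
  exfalso.
  have P : peel (nseq (size l') a) (nseq i a ++ u ++ nseq j a).
    by rewrite -Ea'; exact: (proj1 (E _) (peel_refl _)).
  move: (peel_nseq P).
  exact: nseq_contra un Hh.
rewrite Ea' in E *; clear Ea' l'.
have K : i + j = i' + j'.
  have h1 : i' + j' <= i + j.
    apply: (UB un Hh Hl (w := u')); apply/E; apply/(VE _ _ _ un' Hh' Hl').
    exact: peel_refl.
  have h2 : i + j <= i' + j'.
    apply: (UB un' Hh' Hl' (w := u)); apply/E; apply/(VE _ _ _ un Hh Hl).
    exact: peel_refl.
  lia.
have Eu : Peq u u'.
  by move=> w; rewrite -(VE i j w un Hh Hl) E K (VE i' j' w un' Hh' Hl').
have Su : size u < N.
  by move: Hs; rewrite !size_cat !size_nseq; lia.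
have M : minn i j = minn i' j'.
  have h1 : minn i j <= minn i' j'.
    case: (MW i' j' un' Hh' Hl') => c [w [ca P]].
    by move/E: P => P; apply: (LB un Hh Hl ca P).
  have h2 : minn i' j' <= minn i j.
    case: (MW i j un Hh Hl) => c [w [ca P]].
    by move/E: P => P; apply: (LB un' Hh' Hl' ca P).
  lia.
have H : (i' = i /\ j' = j) \/ (i' = j /\ j' = i) by lia.
case: H => [[Ei Ej]|[Ei Ej]]; subst i' j'.
- case: (IH _ _ Su Eu) => Eu'; rewrite Eu' in E *; first by left.
  case: (eqVneq i j) => [eij|nij]; first by right; rewrite revL eij.
  by left; rewrite (G2 IH' un Hh Hl nij E).
- case: (IH _ _ Su Eu) => Eu'; rewrite Eu' in E *; last by right; rewrite revL.
  case: (eqVneq i j) => [eij|nij]; first by left; rewrite eij.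
  have E2 : Peq (nseq i a ++ u ++ nseq j a) (nseq i a ++ rev u ++ nseq j a).
    by move=> w; rewrite E -peel_revE revL.
  by right; rewrite revL (G2 IH' un Hh Hl nij E2).
Qed.


Definition Vsh (m : nat) (v : nat -> nat) :=
  [/\ (forall j, j < m -> v j < m),
      (forall i j, i < m -> j < m -> v i = v j -> i = j),
      (forall k, k < m -> exists2 j, j < m & v j = k) &
      (forall i j k, i < j -> j < k -> k < m -> v j < v i \/ v j < v k)].

Lemma peel_of_V {S : Type} (x0 : S) m : forall (l u : seq S) (v : nat -> nat),
  size l = m -> size u = m -> Vsh m v ->
  (forall j, j < m -> nth x0 u (v j) = nth x0 l j) -> peel l (rev u).
Proof.
elim: m => [|m IH] l u v Sl Su [Vr Vi Vs Vv] Hn.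
  by rewrite (size0nil Sl) (size0nil Su); exact: peel_nil.
have [jm jmlt vjm] := Vs m (ltnSn m).
have jm0 : jm = 0 \/ jm = m.
  case: (posnP jm) => [->|jp]; first by left.
  case: (ltngtP jm m) => [jl|jg|->]; last by right.
  - case: (Vv 0 jm m jp jl (ltnSn m)) => h; have := Vr 0 (ltn0Sn m); have := Vr m (ltnSn m); lia.
  - lia.
case/lastP: u Su Hn => [//|u1 y] Su Hn.
rewrite size_rcons in Su; case: Su => Su.
have Ey : nth x0 (rcons u1 y) m = y by rewrite nth_rcons Su ltnn eqxx.
rewrite rev_rcons.
case: jm0 => Ej; subst jm.
- case: l Sl Hn => [//|x l1] Sl Hn; case: Sl => Sl.
  have xy : x = y by rewrite -Ey -vjm Hn.
  rewrite xy; apply: peel_L.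
  apply: (IH l1 u1 (fun j => v j.+1)) => //.
  + split.
    * move=> j jl; have := Vr j.+1 jl; have : v j.+1 != m.
        by apply/eqP => h; move: (Vi j.+1 0 jl (ltn0Sn m)); rewrite h vjm => /(_ erefl).
      lia.
    * by move=> i j il jl /Vi => /(_ il jl) [].
    * move=> k kl; have [j jl vj] := Vs k (leqW kl).
      case: j jl vj => [|j] jl vj; first by move: kl; rewrite -vj vjm ltnn.
      by exists j.
    * by move=> i j k ij jk km; apply: Vv.
  + move=> j jl; have := Hn j.+1 jl; rewrite nth_rcons Su.
    have h : v j.+1 < m.
      have := Vr j.+1 jl; have : v j.+1 != m.
        by apply/eqP => h; move: (Vi j.+1 0 jl (ltn0Sn m)); rewrite h vjm => /(_ erefl).
      lia.
    by rewrite h.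
- case/lastP: l Sl Hn => [//|l1 x] Sl Hn; rewrite size_rcons in Sl; case: Sl => Sl.
  have xy : x = y.
    by rewrite -Ey -vjm Hn // nth_rcons Sl ltnn eqxx.
  rewrite xy; apply: peel_R.
  have vlt : forall j, j < m -> v j < m.
    move=> j jl; have := Vr j (leqW jl); have : v j != m.
      by apply/eqP => h; move: (Vi j m (leqW jl) (ltnSn m)); rewrite h vjm => /(_ erefl) E; lia.
    lia.
  apply: (IH l1 u1 v) => //.
  + split => //.
    * by move=> i j il jl; apply: Vi; apply: leqW.
    * move=> k kl; have [j jl vj] := Vs k (leqW kl).
      have H : j = m \/ j < m by lia.
      case: H => [jm|jl']; last by exists j.
      by move: kl; rewrite -vj jm vjm ltnn.
    * by move=> i j k ij jk km; apply: Vv => //; apply: leqW.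
  + move=> j jl; have := Hn j (leqW jl); rewrite !nth_rcons Su Sl (vlt j jl) jl.
    by [].
Qed.


Lemma V_of_peel {S : Type} (x0 : S) (l w : seq S) : peel l w ->
  exists v, Vsh (size l) v /\ forall j, j < size l -> nth x0 (rev w) (v j) = nth x0 l j.
Proof.
elim=> [|x l0 w0 P [v [[Vr Vi Vs Vv] Hn]]|x l0 w0 P [v [[Vr Vi Vs Vv] Hn]]].
- by exists id; split => //; split => //.
- have Sw := peel_size P.
  exists (fun j => if j is j'.+1 then v j' else size l0); split.
    split.
    + by move=> [|j] /= jl //; apply: leqW; apply: Vr.
    + move=> [|i] [|j] //= il jl.
      * by move=> h; have := Vr j jl; rewrite -h ltnn.
      * by move=> h; have := Vr i il; rewrite h ltnn.
      * by move=> h; rewrite (Vi i j il jl h).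
    + move=> k /= kl; have [->|kl'] : k = size l0 \/ k < size l0 by lia.
        by exists 0.
      by have [j jl vj] := Vs k kl'; exists j.+1.
    + move=> i j k ij jk km.
      case: j ij jk => [//|j] ij jk; case: k jk km => [//|k] jk km.
      case: i ij => [|i] ij /=.
        by left; apply: Vr; rewrite /= in km; lia.
      by apply: Vv.
  move=> [|j] /= jl; rewrite rev_cons nth_rcons size_rev Sw.
    by rewrite ltnn eqxx.
  by rewrite (Vr j jl) Hn.
- have Sw := peel_size P.
  exists (fun j => if j < size l0 then v j else size l0); split; rewrite size_rcons.
    split.
    + by move=> j jl; case: ifP => // h; apply: leqW; apply: Vr.
    + move=> i j il jl; case: ifP => hi; case: ifP => hj.
      * exact: Vi.
      * by move=> h; have := Vr i hi; rewrite h ltnn.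
      * by move=> h; have := Vr j hj; rewrite -h ltnn.
      * lia.
    + move=> k kl; have [->|kl'] : k = size l0 \/ k < size l0 by lia.
        by exists (size l0); rewrite ?ltnn.
      have [j jl vj] := Vs k kl'; exists j; first lia.
      by rewrite jl.
    + move=> i j k ij jk km.
      have jl : j < size l0 by lia.
      have il : i < size l0 by lia.
      rewrite jl il.
      case: ifP => kl; first exact: Vv.
      by right; apply: Vr.
  move=> j jl; rewrite rev_cons.
  have [h|h] : j < size l0 \/ j = size l0 by lia.
    by rewrite h nth_rcons size_rev Sw (Vr j h) nth_rcons h Hn.
  by subst j; rewrite ltnn nth_rcons size_rev Sw ltnn eqxx nth_rcons ltnn eqxx.
Qed.

Local Open Scope group_scope.


Definition vs (n : nat) (s : 'S_n.+1) : nat -> nat := fun j => s (inord j).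

Lemma vs_val n (s : 'S_n.+1) (x : 'I_n.+1) : vs s x = s x.
Proof. by rewrite /vs inord_val. Qed.

Lemma T_to_V n (s : 'S_n.+1) : in_Tm s -> Vsh n.+1 (vs s).
Proof.
move=> [t [h0 [hd hi]]]; split.
- by move=> j _; apply: ltn_ord.
- move=> i j il jl h.
  have h2 : (inord i : 'I_n.+1) = inord j by apply: (@perm_inj _ s); apply: val_inj.
  by have := congr1 (@nat_of_ord _) h2; rewrite !inordK.
- move=> k kl; exists (s^-1 (inord k) : 'I_n.+1) => //.
  by rewrite vs_val permKV inordK.
- move=> i j k ij jk km.
  have il : i < n.+1 by lia.
  have jl : j < n.+1 by lia.
  case: (leqP j t) => jt.
    left; apply: hd; rewrite ?inordK //.
  right; apply: hi; rewrite ?inordK //; lia.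
Qed.

Lemma V_to_T n (s : 'S_n.+1) : Vsh n.+1 (vs s) -> in_Tm s.
Proof.
move=> [Vr Vi Vs Vv].
have Hv : forall i j k : 'I_n.+1, i < j -> j < k -> s j < s i \/ s j < s k.
  by move=> i j k ij jk; rewrite -!vs_val; apply: Vv => //; apply: ltn_ord.
have Hi : forall i j : 'I_n.+1, (s i : nat) = s j -> i = j.
  by move=> i j /val_inj /perm_inj.
exists (s^-1 (inord 0)).
set t := s^-1 (inord 0).
have h0 : (s t : nat) = 0 by rewrite /t permKV inordK.
split => //; split.
- move=> i j ij jt.
  have [jt'|jt'] : j < t \/ (j : nat) = t by lia.
    by case: (Hv i j _ ij jt') => //; rewrite h0.
  have ejt : j = t by apply: val_inj.
  rewrite ejt h0; case: (posnP (s i)) => // si0.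
  have := Hi i t; rewrite h0 si0 => /(_ erefl) E.
  by move: ij; rewrite ejt E ltnn.
- move=> i j ti ij.
  have [ti'|ti'] : t < i \/ (i : nat) = t by lia.
    by case: (Hv _ i j ti' ij) => //; rewrite h0.
  have eit : i = t by apply: val_inj.
  rewrite eit h0; case: (posnP (s j)) => // sj0.
  have := Hi j t; rewrite h0 sj0 => /(_ erefl) E.
  by move: ij; rewrite eit E ltnn.
Qed.

Lemma Vsh_ext m v w : (forall j, j < m -> v j = w j) -> Vsh m v -> Vsh m w.
Proof.
move=> E [Vr Vi Vs Vv]; split.
- by move=> j jl; rewrite -E //; apply: Vr.
- by move=> i j il jl; rewrite -!E //; apply: Vi.
- by move=> k kl; have [j jl vj] := Vs k kl; exists j => //; rewrite -E.
- move=> i j k ij jk km; rewrite -!E; try lia; exact: Vv.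
Qed.

Lemma Vsh_rev m v : Vsh m v -> Vsh m (fun j => v (m - j.+1)).
Proof.
move=> [Vr Vi Vs Vv]; split.
- by move=> j jl; apply: Vr; lia.
- move=> i j il jl h; have := Vi _ _ _ _ h; lia.
- move=> k kl; have [j jl vj] := Vs k kl; exists (m - j.+1); first lia.
  by have -> : m - (m - j.+1).+1 = j by lia.
- move=> i j k ij jk km.
  case: (Vv (m - k.+1) (m - j.+1) (m - i.+1)); try lia; by [right|left].
Qed.

Lemma mkperm n (v : nat -> nat) : Vsh n.+1 v ->
  exists s : 'S_n.+1, forall j, j < n.+1 -> vs s j = v j.
Proof.
move=> [Vr Vi Vs Vv].
have finj : injective (fun i : 'I_n.+1 => (inord (v i) : 'I_n.+1)).
  move=> i j /(congr1 (@nat_of_ord _)); rewrite !inordK ?Vr // => h.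
  by apply: val_inj; apply: (Vi _ _ (ltn_ord i) (ltn_ord j) h).
exists (perm finj) => j jl.
by rewrite /vs permE /= inordK ?inordK ?Vr.
Qed.


Definition ls {S : Type} n (s : 'I_n.+1 -> S) := mkseq (fun j => s (inord j)) n.+1.
Definition ws {S : Type} n (s : 'I_n.+1 -> S) (g : 'S_n.+1) :=
  mkseq (fun k => perm_act g s (inord k)) n.+1.

Lemma B1 {S : Type} n (s : 'I_n.+1 -> S) (g : 'S_n.+1) :
  in_Tm g -> peel (ls s) (rev (ws s g)).
Proof.
move=> T.
apply: (@peel_of_V _ (s ord0) n.+1 _ _ (vs g)); rewrite ?size_mkseq //.
  exact: T_to_V.
move=> j jl; rewrite /ws nth_mkseq; last exact: ltn_ord.
by rewrite /perm_act /vs inord_val permK nth_mkseq.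
Qed.

Lemma B2 {S : Type} n (s : 'I_n.+1 -> S) w :
  peel (ls s) w -> exists2 g : 'S_n.+1, in_Tm g & ws s g = rev w.
Proof.
move=> P.
have [v [Vv Hn]] := V_of_peel (s ord0) P.
rewrite /ls size_mkseq in Vv Hn.
have [g Hg] := mkperm Vv.
exists g.
  apply: V_to_T; apply: (Vsh_ext (v := v)) => // j jl; by rewrite Hg.
apply: (@eq_from_nth _ (s ord0)).
  by rewrite size_mkseq size_rev (peel_size P) size_mkseq.
move=> k; rewrite size_mkseq => kl.
rewrite nth_mkseq // /perm_act.
set J := g^-1 (inord k).
have vJ : v J = k.
  rewrite -Hg; last exact: ltn_ord.
  by rewrite vs_val /J permKV inordK.
by rewrite -vJ Hn ?ltn_ord // nth_mkseq ?ltn_ord // inord_val.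
Qed.

Lemma tau_inv n (i : 'I_n) : (tau_m n)^-1 i = rev_ord i.
Proof.
apply: (@perm_inj _ (tau_m n)); rewrite permKV /tau_m permE.
by rewrite rev_ordK.
Qed.

Lemma Trev n (g : 'S_n.+1) : in_Tm g -> in_Tm (tau_m n.+1 * g).
Proof.
move=> T; apply: V_to_T.
apply: (Vsh_ext (v := fun j => vs g (n.+1 - j.+1))); last exact: Vsh_rev (T_to_V T).
move=> j jl; rewrite /vs permM /tau_m permE; congr (nat_of_ord (g _)).
by apply: val_inj; rewrite /= !inordK //; lia.
Qed.

Lemma main_comb (S : Type) (m : nat) (hm : (1 <= m)%N) (s s' : 'I_m -> S) :
  mirrored s s' <-> (s = s' \/ s = rev_seq s').
Proof.
case: m hm s s' => [//|n] _ s s'.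
split.
- move=> [M1 M2].
  have E : Peq (ls s) (ls s').
    move=> w; split => P.
    + have [g Tg Ew] := B2 P.
      have [g' Tg' Ea] := M1 g Tg.
      have := B1 s' Tg'.
      by rewrite /ws -Ea -/(ws s g) Ew revK.
    + have [g Tg Ew] := B2 P.
      have [g' Tg' Ea] := M2 g Tg.
      have := B1 s Tg'.
      by rewrite /ws -Ea -/(ws s' g) Ew revK.
  have Hx : forall (t : 'I_n.+1 -> S) i, t i = nth (s ord0) (ls t) i.
    by move=> t i; rewrite nth_mkseq // inord_val.
  case: (comb (N := (size (ls s)).+1) (ltnSn _) E) => Es.
  + left; apply: functional_extensionality => i.
    by rewrite Hx -Es -Hx.
  + right; apply: functional_extensionality => i.
    rewrite /rev_seq /perm_act tau_inv Hx -(revK (ls s)) -Es.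
    rewrite nth_rev; last by rewrite size_mkseq.
    rewrite size_mkseq nth_mkseq; last by rewrite subSS; lia.
    by have <- : (rev_ord i : nat) = n.+1 - i.+1 by []; rewrite inord_val.
- case=> [<-|Er].
    by split => g Tg; exists g.
  split => g Tg.
  + exists (tau_m n.+1 * g); first exact: Trev.
    apply: functional_extensionality => i.
    by rewrite /perm_act Er /rev_seq /perm_act invMg permM.
  + exists (tau_m n.+1 * g); first exact: Trev.
    apply: functional_extensionality => i.
    by rewrite /perm_act Er /rev_seq /perm_act invMg permM !tau_inv rev_ordK.
Qed.


Local Close Scope group_scope.
Unset Implicit Arguments.

Theorem mainTheorem9 (S : Type) (m : nat) (hm : (1 <= m)%N) (s s' : 'I_m -> S) :
  mirrored s s' <-> (s = s' \/ s = rev_seq s').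
Proof. exact: main_comb. Qed.
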